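(* Let $f_{s_1d}, f_{s_1r}, f_{rd}, g_{rd}^{s_1}, g_{s_1d}^{r}\in[0,1]$ satisfy $0\le g_{s_1d}^{r}\le f_{s_1d}$, $0\le g_{rd}^{s_1}< f_{rd}$, set $T_1=(1-f_{s_1d})f_{s_1r}$, and assume $T_1+f_{s_1d}>0$ and $T_1+g_{rd}^{s_1}>0$. For $\beta\in[0,1]$ define $$\mu_1^{\mathrm{SBC}}(\beta)=(1-\beta)(f_{s_1d}+T_1)+\beta\,g_{s_1d}^{r},\qquad \mu_{u_1}^{\mathrm{SBC}}(\beta)=\frac{f_{rd}}{(1-\beta)T_1+f_{rd}-\beta\,g_{rd}^{s_1}}\,\mu_1^{\mathrm{SBC}}(\beta).$$ If $$f_{rd}-g_{rd}^{s_1}\le \frac{g_{s_1d}^{r}(T_1+f_{rd})}{T_1+f_{s_1d}},$$ then $$\max_{0\le\beta\le 1}\min\{\mu_1^{\mathrm{SBC}}(\beta),\mu_{u_1}^{\mathrm{SBC}}(\beta)\}=\Big(1-\frac{T_1}{T_1+g_{rd}^{s_1}}\Big)(f_{s_1d}+T_1)+\frac{T_1}{T_1+g_{rd}^{s_1}}\,g_{s_1d}^{r},$$ attained at $\beta^*=T_1/(T_1+g_{rd}^{s_1})$.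
   Context: $f_{mn}$ denotes the probability that link $(m,n)$ is not in outage and $g_{mn}^{I}$ the probability that it is not in outage under simultaneous interference from node $I$ (so $g_{mn}^I\le f_{mn}$). This is the optimization of the maximal stable throughput of a single source $s_1$ in the sensing-based cooperative scheme over the probability $\beta$ that the relay transmits during a busy slot. *)

(* Defs.v *)
From Stdlib Require Import Reals Lra.
Open Scope R_scope.

Definition T1 (fs1d fs1r : R) : R := (1 - fs1d) * fs1r.

Definition mu1 (fs1d fs1r gs1dr beta : R) : R :=
  (1 - beta) * (fs1d + T1 fs1d fs1r) + beta * gs1dr.

Definition muu1 (fs1d fs1r frd grds1 gs1dr beta : R) : R :=
  frd / ((1 - beta) * T1 fs1d fs1r + frd - beta * grds1)
  * mu1 fs1d fs1r gs1dr beta.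

Definition obj (fs1d fs1r frd grds1 gs1dr beta : R) : R :=
  Rmin (mu1 fs1d fs1r gs1dr beta) (muu1 fs1d fs1r frd grds1 gs1dr beta).

(* Main.v *)
Require Import Defs.
From Stdlib Require Import Reals Lra Psatz.
Open Scope R_scope.

Theorem lemma1 (fs1d fs1r frd grds1 gs1dr : R) :
  0 <= fs1d <= 1 -> 0 <= fs1r <= 1 -> 0 <= frd <= 1 ->
  0 <= grds1 <= 1 -> 0 <= gs1dr <= 1 ->
  0 <= gs1dr <= fs1d ->
  0 <= grds1 < frd ->
  T1 fs1d fs1r + fs1d > 0 ->
  T1 fs1d fs1r + grds1 > 0 ->
  frd - grds1 <=
    gs1dr * (T1 fs1d fs1r + frd) / (T1 fs1d fs1r + fs1d) ->
  let bstar := T1 fs1d fs1r / (T1 fs1d fs1r + grds1) in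
  let v := (1 - bstar) * (fs1d + T1 fs1d fs1r) + bstar * gs1dr in
  (0 <= bstar <= 1 /\
   obj fs1d fs1r frd grds1 gs1dr bstar = v /\
   (forall beta, 0 <= beta <= 1 -> obj fs1d fs1r frd grds1 gs1dr beta <= v)).
Proof.
  intros H1 H2 H3 H4 H5 H6 H7 H8 H9 H10 bstar v. subst bstar v.
  assert (HT : 0 <= T1 fs1d fs1r) by (unfold T1; nra).
  unfold obj, muu1, mu1 in *.
  set (T := T1 fs1d fs1r) in *.
  clearbody T.
  set (A := fs1d + T) in *.
  assert (HA : A > 0) by (unfold A; lra).
  assert (Hkey : A * (frd - grds1) <= gs1dr * (T + frd)).
  { apply (Rmult_le_compat_l A) in H10; [|lra].
    replace (A * (gs1dr * (T + frd) / (T + fs1d))) with (gs1dr * (T + frd)) in H10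
      by (unfold A; field; lra). lra. }
  set (bs := T / (T + grds1)) in *.
  assert (Hbs : bs * (T + grds1) = T) by (unfold bs; field; lra).
  assert (Hbs0 : 0 <= bs) by (unfold bs; apply Rmult_le_pos; [lra | left; apply Rinv_0_lt_compat; lra]).
  assert (Hbs1 : bs <= 1).
  { unfold bs. apply (Rmult_le_reg_r (T + grds1)); [lra|].
    unfold Rdiv; rewrite Rmult_assoc, Rinv_l; lra. }
  split; [lra|]. split.
  - replace ((1 - bs) * T + frd - bs * grds1) with frd by lra.
    replace (frd / frd) with 1 by (field; lra).
    rewrite Rmult_1_l. unfold Rmin; destruct Rle_dec. all: lra.
  - intros b Hb.
    assert (HD : (1 - b) * T + frd - b * grds1 > 0) by nra.
    set (D := (1 - b) * T + frd - b * grds1) in *.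
    destruct (Rle_dec b bs) as [Hle|Hgt].
    + eapply Rle_trans; [apply Rmin_r|].
      apply (Rmult_le_reg_r D); [lra|].
      unfold Rdiv. replace (frd * / D * ((1 - b) * A + b * gs1dr) * D)
        with (frd * ((1 - b) * A + b * gs1dr)) by (field; lra).
      apply (Rmult_le_reg_r (T + grds1)); [lra|].
      assert (E : ((1 - bs) * A + bs * gs1dr) * (T + grds1)
                  = (T + grds1) * A - (A - gs1dr) * T) by nra.
      assert (HP : 0 <= T - b * (T + grds1)) by nra.
      assert (Hq : 0 <= (T + grds1) * A - (A - gs1dr) * (T + frd)) by nra.
      assert (Hpr := Rmult_le_pos _ _ HP Hq).
      replace (((1 - bs) * A + bs * gs1dr) * D * (T + grds1))
        with (((1 - bs) * A + bs * gs1dr) * (T + grds1) * D) by ring.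
      rewrite E. unfold D. nra.
    + eapply Rle_trans; [apply Rmin_l|].
      assert (gs1dr <= A) by (unfold A; lra). nra.
Qed.
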